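(* Let $M$ be a monoidal category, $C$ an $M$-actegory and $x\in C$. Then in the bicategory $\mathit{Tamb}$ there are 2-cells $\varepsilon_x:R_x\otimes L_x\Rightarrow C(-,=)$ (in $\mathit{Tamb}_{C,C}$), given by composition $\int^{n}C(c,n\odot x)\times C(n\odot x,c')\to C(c,c')$, and $\eta_x:M(-,=)\Rightarrow L_x\otimes R_x$ (in $\mathit{Tamb}_{M,M}$), given by $M(k,k')\ni h\mapsto h\odot x\in C(k\odot x,k'\odot x)\cong\int^{c\in C}C(k\odot x,c)\times C(c,k'\odot x)$, which are morphisms of Tambara modules and satisfy the triangle identities: the composites $R_x\cong R_x\otimes M(-,=)\xrightarrow{R_x\otimes\eta_x}R_x\otimes L_x\otimes R_x\xrightarrow{\varepsilon_x\otimes R_x}C(-,=)\otimes R_x\cong R_x$ and $L_x\cong M(-,=)\otimes L_x\xrightarrow{\eta_x\otimes L_x}L_x\otimes R_x\otimes L_x\xrightarrow{L_x\otimes\varepsilon_x}L_x\otimes C(-,=)\cong L_x$ are identities (bicategorical associators and unitors being inserted as needed). Thus $R_x$ and $L_x$ are adjoint in $\mathit{Tamb}$. Moreover these structure maps are dinatural in $x$: for every $f:x\to y$ in $C$, $(R_f\otimes L_y);\varepsilon_y=(R_x\otimes L_f);\varepsilon_x$ as 2-cells $R_x\otimes L_y\Rightarrow C(-,=)$, and $\eta_x;(L_x\otimes R_f)=\eta_y;(L_f\otimes R_y)$ as 2-cells $M(-,=)\Rightarrow L_x\otimes R_y$.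
   Context: $(M,\otimes,I,\lambda,a)$ is a monoidal category. An $M$-actegory is a category $C$ with a functor $\odot:M\times C\to C$ and coherent natural isomorphisms $\lambda_x:I\odot x\to x$, $a_{m,n,x}:(m\otimes n)\odot x\to m\odot(n\odot x)$; $M$ is an $M$-actegory via $\otimes$. Composition is diagrammatic: $f;g$ means $f$ then $g$. A Tambara module $P\in\mathit{Tamb}_{C,D}$ ($C,D$ $M$-actegories) is a functor $P:C^{op}\times D\to\mathrm{Set}$ with strength maps $P(c,d)\to P(m\odot c,m\odot d)$ natural in $c,d$, (di)natural in $m$, compatible with unitors/associators; morphisms (2-cells) are strength-preserving natural transformations. $\mathit{Tamb}$ is the bicategory of $M$-actegories, with hom-categories $\mathit{Tamb}_{C,D}$, identity 1-cells the hom-profunctors $C(-,=)$, and composition $(P\otimes Q)(c,e)=\int^{d}P(c,d)\times Q(d,e)$ for $P\in\mathit{Tamb}_{C,D},Q\in\mathit{Tamb}_{D,E}$. For $x\in C$, $R_x\in\mathit{Tamb}_{C,M}$ is $(c,n)\mapsto C(c,n\odot x)$ with strength $h\mapsto(m\odot h);a^{-1}_{m,n,x}$, and $L_x\in\mathit{Tamb}_{M,C}$ is $(n,c)\mapsto C(n\odot x,c)$ with strength $h\mapsto a_{m,n,x};(m\odot h)$. For $f:x\to y$ in $C$, $R_f:R_x\Rightarrow R_y$ postcomposes with $n\odot f$ and $L_f:L_y\Rightarrow L_x$ precomposes with $n\odot f$. *)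

(* Defs.v *)
(* elementary category theory set up by hand.
   Composition is diagrammatic:  f ;; g  means f then g. *)
From Stdlib Require Import ClassicalEpsilon.

Record Cat := {
  ob :> Type;
  hom : ob -> ob -> Type;
  cid : forall a, hom a a;
  comp : forall a b c, hom a b -> hom b c -> hom a c;
  comp_id_l : forall a b (f : hom a b), comp _ _ _ (cid a) f = f;
  comp_id_r : forall a b (f : hom a b), comp _ _ _ f (cid b) = f;
  comp_assoc : forall a b c d (f : hom a b) (g : hom b c) (h : hom c d),
      comp _ _ _ (comp _ _ _ f g) h = comp _ _ _ f (comp _ _ _ g h)
}.
Arguments hom {_} _ _.
Arguments cid {_} _.
Arguments comp {_ _ _ _} _ _.
Notation "f ;; g" := (comp f g) (at level 40, left associativity).

Record MonCat := {
  mcat :> Cat;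
  tens : mcat -> mcat -> mcat;
  tens_hom : forall (a a' b b' : mcat), hom a a' -> hom b b' -> hom (tens a b) (tens a' b');
  tens_id : forall a b, tens_hom _ _ _ _ (cid a) (cid b) = cid (tens a b);
  tens_comp : forall a a' a'' b b' b'' (f : hom a a') (f' : hom a' a'')
                     (g : hom b b') (g' : hom b' b''),
      tens_hom _ _ _ _ (f ;; f') (g ;; g') = tens_hom _ _ _ _ f g ;; tens_hom _ _ _ _ f' g';
  munit : mcat;
  mlam : forall a, hom (tens munit a) a;
  mlam_inv : forall a, hom a (tens munit a);
  mlam_iso1 : forall a, mlam a ;; mlam_inv a = cid _;
  mlam_iso2 : forall a, mlam_inv a ;; mlam a = cid _;
  mlam_nat : forall a b (f : hom a b),
      tens_hom _ _ _ _ (cid munit) f ;; mlam b = mlam a ;; f;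
  mrho : forall a, hom (tens a munit) a;
  mrho_inv : forall a, hom a (tens a munit);
  mrho_iso1 : forall a, mrho a ;; mrho_inv a = cid _;
  mrho_iso2 : forall a, mrho_inv a ;; mrho a = cid _;
  mrho_nat : forall a b (f : hom a b),
      tens_hom _ _ _ _ f (cid munit) ;; mrho b = mrho a ;; f;
  massoc : forall a b c, hom (tens (tens a b) c) (tens a (tens b c));
  massoc_inv : forall a b c, hom (tens a (tens b c)) (tens (tens a b) c);
  massoc_iso1 : forall a b c, massoc a b c ;; massoc_inv a b c = cid _;
  massoc_iso2 : forall a b c, massoc_inv a b c ;; massoc a b c = cid _;
  massoc_nat : forall a a' b b' c c' (f : hom a a') (g : hom b b') (h : hom c c'),
      tens_hom _ _ _ _ (tens_hom _ _ _ _ f g) h ;; massoc a' b' c'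
      = massoc a b c ;; tens_hom _ _ _ _ f (tens_hom _ _ _ _ g h);
  pentagon : forall a b c d,
      massoc (tens a b) c d ;; massoc a b (tens c d)
      = tens_hom _ _ _ _ (massoc a b c) (cid d) ;; massoc a (tens b c) d
        ;; tens_hom _ _ _ _ (cid a) (massoc b c d);
  triangle : forall a b,
      massoc a munit b ;; tens_hom _ _ _ _ (cid a) (mlam b)
      = tens_hom _ _ _ _ (mrho a) (cid b)
}.
Arguments tens {_} _ _.
Arguments tens_hom {_ _ _ _ _} _ _.
Arguments munit {_}.
Arguments mlam {_} _.
Arguments mrho {_} _.
Arguments massoc {_} _ _ _.

Record ActData (M : MonCat) := {
  acat :> Cat;
  act : M -> acat -> acat;
  act_hom : forall (m m' : M) (x x' : acat),
      hom m m' -> hom x x' -> hom (act m x) (act m' x');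
  act_id : forall m x, act_hom _ _ _ _ (cid m) (cid x) = cid (act m x);
  act_comp : forall (m m' m'' : M) (x x' x'' : acat) (u : hom m m') (u' : hom m' m'')
                    (f : hom x x') (f' : hom x' x''),
      act_hom _ _ _ _ (u ;; u') (f ;; f') = act_hom _ _ _ _ u f ;; act_hom _ _ _ _ u' f';
  alam : forall x, hom (act munit x) x;
  alam_inv : forall x, hom x (act munit x);
  alam_iso1 : forall x, alam x ;; alam_inv x = cid _;
  alam_iso2 : forall x, alam_inv x ;; alam x = cid _;
  alam_nat : forall x y (f : hom x y),
      act_hom _ _ _ _ (cid munit) f ;; alam y = alam x ;; f;
  aassoc : forall m n x, hom (act (tens m n) x) (act m (act n x));
  aassoc_inv : forall m n x, hom (act m (act n x)) (act (tens m n) x);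
  aassoc_iso1 : forall m n x, aassoc m n x ;; aassoc_inv m n x = cid _;
  aassoc_iso2 : forall m n x, aassoc_inv m n x ;; aassoc m n x = cid _;
  aassoc_nat : forall (m m' n n' : M) (x x' : acat) (u : hom m m') (v : hom n n') (f : hom x x'),
      act_hom _ _ _ _ (tens_hom u v) f ;; aassoc m' n' x'
      = aassoc m n x ;; act_hom _ _ _ _ u (act_hom _ _ _ _ v f)
}.
Arguments acat {_} _.
Arguments act {_ _} _ _.
Arguments act_hom {_ _ _ _ _ _} _ _.
Arguments alam {_ _} _.
Arguments alam_inv {_ _} _.
Arguments aassoc {_ _} _ _ _.
Arguments aassoc_inv {_ _} _ _ _.

Definition ActCoherent {M : MonCat} (A : ActData M) : Prop :=
  (forall (m n p : M) (x : A),
      aassoc (tens m n) p x ;; aassoc m n (act p x)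
      = act_hom (massoc m n p) (cid x) ;; aassoc m (tens n p) x
        ;; act_hom (cid m) (aassoc n p x)) /\
  (forall (m : M) (x : A),
      aassoc m munit x ;; act_hom (cid m) (alam x) = act_hom (mrho m) (cid x)) /\
  (forall (m : M) (x : A),
      aassoc munit m x ;; alam (act m x) = act_hom (mlam m) (cid x)).

Definition selfAct (M : MonCat) : ActData M := {|
  acat := mcat M;
  act := @tens M;
  act_hom := @tens_hom M;
  act_id := tens_id M;
  act_comp := tens_comp M;
  alam := @mlam M;
  alam_inv := mlam_inv M;
  alam_iso1 := mlam_iso1 M;
  alam_iso2 := mlam_iso2 M;
  alam_nat := mlam_nat M;
  aassoc := @massoc M;
  aassoc_inv := massoc_inv M;
  aassoc_iso1 := massoc_iso1 M;
  aassoc_iso2 := massoc_iso2 M;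
  aassoc_nat := massoc_nat M
|}.

Record Prof {M : MonCat} (A B : ActData M) := {
  pob :> A -> B -> Type;
  pmap : forall (c c' : A) (d d' : B), hom c' c -> hom d d' -> pob c d -> pob c' d';
  pstr : forall (m : M) (c : A) (d : B), pob c d -> pob (act m c) (act m d)
}.
Arguments pob {_ _ _} _ _ _.
Arguments pmap {_ _ _} _ {_ _ _ _} _ _ _.
Arguments pstr {_ _ _} _ _ {_ _} _.

Definition IsTamb {M : MonCat} {A B : ActData M} (P : Prof A B) : Prop :=
  (forall c d (p : P c d), pmap P (cid c) (cid d) p = p) /\
  (forall (c c1 c2 : A) (d d1 d2 : B) (f1 : hom c1 c) (f2 : hom c2 c1)
          (g1 : hom d d1) (g2 : hom d1 d2) (p : P c d),
      pmap P f2 g2 (pmap P f1 g1 p) = pmap P (f2 ;; f1) (g1 ;; g2) p) /\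
  (forall (m : M) (c c' : A) (d d' : B) (f : hom c' c) (g : hom d d') (p : P c d),
      pstr P m (pmap P f g p) = pmap P (act_hom (cid m) f) (act_hom (cid m) g) (pstr P m p)) /\
  (forall (m m' : M) (u : hom m m') (c : A) (d : B) (p : P c d),
      pmap P (cid (act m c)) (act_hom u (cid d)) (pstr P m p)
      = pmap P (act_hom u (cid c)) (cid (act m' d)) (pstr P m' p)) /\
  (forall c d (p : P c d), pmap P (alam_inv c) (alam d) (pstr P munit p) = p) /\
  (forall (m n : M) c d (p : P c d),
      pstr P m (pstr P n p) = pmap P (aassoc_inv m n c) (aassoc m n d) (pstr P (tens m n) p)).

Definition IsTambMor {M : MonCat} {A B : ActData M} (P Q : Prof A B)
    (al : forall c d, P c d -> Q c d) : Prop :=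
  (forall (c c' : A) (d d' : B) (f : hom c' c) (g : hom d d') (p : P c d),
      al c' d' (pmap P f g p) = pmap Q f g (al c d p)) /\
  (forall (m : M) c d (p : P c d), al _ _ (pstr P m p) = pstr Q m (al c d p)).

Inductive eqclos {X : Type} (R : X -> X -> Prop) : X -> X -> Prop :=
| ec_base : forall x y, R x y -> eqclos R x y
| ec_refl : forall x, eqclos R x x
| ec_sym : forall x y, eqclos R x y -> eqclos R y x
| ec_trans : forall x y z, eqclos R x y -> eqclos R y z -> eqclos R x z.

Definition quot {X : Type} (R : X -> X -> Prop) : Type :=
  { S : X -> Prop | exists x, S = eqclos R x }.
Definition cls {X : Type} (R : X -> X -> Prop) (x : X) : quot R :=
  exist _ (eqclos R x) (ex_intro _ x eq_refl).
Definition repr {X : Type} {R : X -> X -> Prop} (q : quot R) : X :=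
  proj1_sig (constructive_indefinite_description _ (proj2_sig q)).

(* Composition of profunctors: (P ⊗ Q)(c,e) = ∫^d P(c,d) × Q(d,e).     *)
Section Compose.
Context {M : MonCat} {A B E : ActData M} (P : Prof A B) (Q : Prof B E).

Definition ctr (c : A) (e : E) : Type := { d : B & (P c d * Q d e)%type }.

Inductive coend_rel (c : A) (e : E) : ctr c e -> ctr c e -> Prop :=
| cr_intro : forall (d d' : B) (g : hom d d') (p : P c d) (q : Q d' e),
    coend_rel c e (existT _ d' (pmap P (cid c) g p, q))
                  (existT _ d (p, pmap Q g (cid e) q)).

Definition coend (c : A) (e : E) : Type := quot (coend_rel c e).

Definition cc {c : A} {e : E} (d : B) (p : P c d) (q : Q d e) : coend c e :=
  cls (coend_rel c e) (existT _ d (p, q)).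

Definition tcomp : Prof A E := {|
  pob := coend;
  pmap := fun c c' e e' f h z =>
    let t := repr z in
    cc (projT1 t) (pmap P f (cid _) (fst (projT2 t))) (pmap Q (cid _) h (snd (projT2 t)));
  pstr := fun m c e z =>
    let t := repr z in
    cc (act m (projT1 t)) (pstr P m (fst (projT2 t))) (pstr Q m (snd (projT2 t)))
|}.
End Compose.
Arguments cc {_ _ _ _} _ _ {_ _} _ _ _.

Notation "P <o> Q" := (tcomp P Q) (at level 35, right associativity).

(* identity 1-cell: the hom-profunctor C(-,=) *)
Definition HomP {M : MonCat} (A : ActData M) : Prof A A := {|
  pob := fun c d => hom c d;
  pmap := fun c c' d d' f g h => f ;; h ;; g;
  pstr := fun m c d h => act_hom (cid m) h
|}.

Section BicatOps.
Context {M : MonCat}.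

Definition whiskR {A B E : ActData M} {P P' : Prof A B}
    (al : forall c d, P c d -> P' c d) (Q : Prof B E)
    : forall c e, (P <o> Q) c e -> (P' <o> Q) c e :=
  fun c e z => let t := repr z in
    cc P' Q (projT1 t) (al _ _ (fst (projT2 t))) (snd (projT2 t)).

Definition whiskL {A B E : ActData M} (P : Prof A B) {Q Q' : Prof B E}
    (be : forall d e, Q d e -> Q' d e)
    : forall c e, (P <o> Q) c e -> (P <o> Q') c e :=
  fun c e z => let t := repr z in
    cc P Q' (projT1 t) (fst (projT2 t)) (be _ _ (snd (projT2 t))).

Definition assocT {A B D E : ActData M} (P : Prof A B) (Q : Prof B D) (S : Prof D E)
    : forall c f, ((P <o> Q) <o> S) c f -> (P <o> (Q <o> S)) c f :=
  fun c f z => let t := repr z in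
    let u := repr (fst (projT2 t)) in
    cc P (Q <o> S) (projT1 u) (fst (projT2 u))
       (cc Q S (projT1 t) (snd (projT2 u)) (snd (projT2 t))).

Definition assocT_inv {A B D E : ActData M} (P : Prof A B) (Q : Prof B D) (S : Prof D E)
    : forall c f, (P <o> (Q <o> S)) c f -> ((P <o> Q) <o> S) c f :=
  fun c f z => let t := repr z in
    let u := repr (snd (projT2 t)) in
    cc (P <o> Q) S (projT1 u)
       (cc P Q (projT1 t) (fst (projT2 t)) (fst (projT2 u))) (snd (projT2 u)).

Definition lunitT {A B : ActData M} (P : Prof A B)
    : forall c d, (HomP A <o> P) c d -> P c d :=
  fun c d z => let t := repr z in pmap P (fst (projT2 t)) (cid d) (snd (projT2 t)).
Definition lunitT_inv {A B : ActData M} (P : Prof A B)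
    : forall c d, P c d -> (HomP A <o> P) c d :=
  fun c d p => cc (HomP A) P c (cid c) p.

Definition runitT {A B : ActData M} (P : Prof A B)
    : forall c d, (P <o> HomP B) c d -> P c d :=
  fun c d z => let t := repr z in pmap P (cid c) (snd (projT2 t)) (fst (projT2 t)).
Definition runitT_inv {A B : ActData M} (P : Prof A B)
    : forall c d, P c d -> (P <o> HomP B) c d :=
  fun c d p => cc P (HomP B) d p (cid d).
End BicatOps.

Section RL.
Context {M : MonCat} (C : ActData M).

Definition Rx (x : C) : Prof C (selfAct M) := @Build_Prof M C (selfAct M)
  (fun (c : C) (n : M) => hom c (act n x))
  (fun (c c' : C) (n n' : M) (f : hom c' c) (g : hom n n') (h : hom c (act n x)) =>
            f ;; h ;; act_hom g (cid x))
  (fun (m : M) (c : C) (n : M) (h : hom c (act n x)) =>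
            act_hom (cid m) h ;; aassoc_inv m n x).

Definition Lx (x : C) : Prof (selfAct M) C := @Build_Prof M (selfAct M) C
  (fun (n : M) (c : C) => hom (act n x) c)
  (fun (n n' : M) (c c' : C) (g : hom n' n) (f : hom c c') (h : hom (act n x) c) =>
            act_hom g (cid x) ;; h ;; f)
  (fun (m n : M) (c : C) (h : hom (act n x) c) =>
            aassoc m n x ;; act_hom (cid m) h).

Definition Rf {x y : C} (f : hom x y) : forall c n, Rx x c n -> Rx y c n :=
  fun c n h => h ;; act_hom (cid n) f.
Definition Lf {x y : C} (f : hom x y) : forall n c, Lx y n c -> Lx x n c :=
  fun n c h => act_hom (cid n) f ;; h.
End RL.

(* Main.v *)
Require Import Defs.
From Stdlib Require Import ClassicalEpsilon ProofIrrelevance FunctionalExtensionality PropExtensionality.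

Lemma exist_eq {X} (P : X -> Prop) x y (px : P x) (py : P y) : x = y -> exist P x px = exist P y py.
Proof. intros ->. f_equal. apply proof_irrelevance. Qed.

Lemma eqclos_sym_trans {X} (R : X -> X -> Prop) a b : eqclos R a b -> eqclos R a = eqclos R b.
Proof.
  intros H. extensionality z. apply propositional_extensionality. split; intro H'.
  - eapply ec_trans; [apply ec_sym; exact H | exact H'].
  - eapply ec_trans; [exact H | exact H'].
Qed.

Lemma quot_sound {X} (R : X -> X -> Prop) a b : eqclos R a b -> cls R a = cls R b.
Proof. intros H. unfold cls. apply exist_eq. now apply eqclos_sym_trans. Qed.

Lemma repr_rel {X} (R : X -> X -> Prop) x : eqclos R (repr (cls R x)) x.
Proof.
  unfold repr. destruct (constructive_indefinite_description _ _) as [y Hy]. simpl in *.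
  assert (H : eqclos R x x) by apply ec_refl. rewrite Hy in H. exact H.
Qed.

Lemma lift {X Y} (R : X -> X -> Prop) (F : X -> Y) :
  (forall a b, R a b -> F a = F b) -> forall x, F (repr (cls R x)) = F x.
Proof.
  intros H x. assert (E : forall a b, eqclos R a b -> F a = F b).
  { induction 1; [apply H; assumption | reflexivity | symmetry; assumption | etransitivity; eassumption]. }
  apply E, repr_rel.
Qed.

Section G.
Context {M : MonCat}.

Definition FL {A B : ActData M} (P : Prof A B) : Prop :=
  (forall c d (p : P c d), pmap P (cid c) (cid d) p = p) /\
  (forall (c c1 c2 : A) (d d1 d2 : B) (f1 : hom c1 c) (f2 : hom c2 c1)
          (g1 : hom d d1) (g2 : hom d1 d2) (p : P c d),
      pmap P f2 g2 (pmap P f1 g1 p) = pmap P (f2 ;; f1) (g1 ;; g2) p).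

Definition SN {A B : ActData M} (P : Prof A B) : Prop :=
  forall (m : M) (c c' : A) (d d' : B) (f : hom c' c) (g : hom d d') (p : P c d),
      pstr P m (pmap P f g p) = pmap P (act_hom (cid m) f) (act_hom (cid m) g) (pstr P m p).

Lemma cc_eq {A B E : ActData M} (P : Prof A B) (Q : Prof B E) c e (d d' : B) (g : hom d d')
  (p : P c d) (q : Q d' e) :
  cc P Q d' (pmap P (cid c) g p) q = cc P Q d p (pmap Q g (cid e) q).
Proof. apply quot_sound, ec_base. constructor. Qed.

Lemma pmap_cc {A B E : ActData M} (P : Prof A B) (Q : Prof B E) (HP : FL P) (HQ : FL Q)
  c c' e e' (f : hom c' c) (h : hom e e') d (p : P c d) (q : Q d e) :
  pmap (P <o> Q) f h (cc P Q d p q) = cc P Q d (pmap P f (cid d) p) (pmap Q (cid d) h q).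
Proof.
  destruct HP as [HP1 HP2], HQ as [HQ1 HQ2].
  refine (lift _ (fun t => cc P Q (projT1 t) (pmap P f (cid _) (fst (projT2 t)))
                   (pmap Q (cid _) h (snd (projT2 t)))) _ (existT _ d (p, q))).
  intros a b []. simpl.
  rewrite !HP2, !HQ2, !comp_id_l, !comp_id_r.
  assert (E1 : pmap P f g p0 = pmap P (cid c') g (pmap P f (cid d0) p0))
    by (rewrite HP2, comp_id_l, comp_id_l; reflexivity).
  assert (E2 : pmap Q g h q0 = pmap Q g (cid e') (pmap Q (cid d') h q0))
    by (rewrite HQ2, comp_id_r, comp_id_r; reflexivity).
  rewrite E1, E2. apply cc_eq.
Qed.

Lemma cls_repr {X} (R : X -> X -> Prop) (q : quot R) : cls R (repr q) = q.
Proof.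
  destruct q as [S HS]. unfold repr. simpl.
  destruct (constructive_indefinite_description _ _) as [y Hy]. simpl.
  unfold cls. apply exist_eq. symmetry; exact Hy.
Qed.

Lemma coend_ind {A B E : ActData M} (P : Prof A B) (Q : Prof B E) c e
  (Pr : (P <o> Q) c e -> Prop) : (forall d p q, Pr (cc P Q d p q)) -> forall z, Pr z.
Proof.
  intros H z. rewrite <- (cls_repr _ z). destruct (repr z) as [d [p q]]. apply H.
Qed.

Lemma pstr_cc {A B E : ActData M} (P : Prof A B) (Q : Prof B E) (HP : SN P) (HQ : SN Q)
  (HP1 : forall c d (p : P c d), pmap P (cid c) (cid d) p = p)
  (HQ1 : forall c d (p : Q c d), pmap Q (cid c) (cid d) p = p)
  m c e d (p : P c d) (q : Q d e) :
  pstr (P <o> Q) m (cc P Q d p q) = cc P Q (act m d) (pstr P m p) (pstr Q m q).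
Proof.
  refine (lift _ (fun t => cc P Q (act m (projT1 t)) (pstr P m (fst (projT2 t)))
                   (pstr Q m (snd (projT2 t)))) _ (existT _ d (p, q))).
  intros a b []. simpl.
  rewrite HP, HQ, !act_id. apply cc_eq.
Qed.

Lemma whiskL_cc {A B E : ActData M} (P : Prof A B) {Q Q' : Prof B E}
  (be : forall d e, Q d e -> Q' d e)
  (Hbe : forall (c c' : B) (d d' : E) (f : hom c' c) (g : hom d d') (p : Q c d),
      be c' d' (pmap Q f g p) = pmap Q' f g (be c d p))
  c e d (p : P c d) (q : Q d e) :
  whiskL P be c e (cc P Q d p q) = cc P Q' d p (be d e q).
Proof.
  refine (lift _ (fun t => cc P Q' (projT1 t) (fst (projT2 t)) (be _ _ (snd (projT2 t))))
             _ (existT _ d (p, q))).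
  intros a b []. simpl. rewrite Hbe. apply cc_eq.
Qed.

Lemma whiskR_cc {A B E : ActData M} {P P' : Prof A B} (Q : Prof B E)
  (al : forall c d, P c d -> P' c d)
  (Hal : forall (c c' : A) (d d' : B) (f : hom c' c) (g : hom d d') (p : P c d),
      al c' d' (pmap P f g p) = pmap P' f g (al c d p))
  c e d (p : P c d) (q : Q d e) :
  whiskR al Q c e (cc P Q d p q) = cc P' Q d (al c d p) q.
Proof.
  refine (lift _ (fun t => cc P' Q (projT1 t) (al _ _ (fst (projT2 t))) (snd (projT2 t)))
             _ (existT _ d (p, q))).
  intros a b []. simpl. rewrite Hal. apply cc_eq.
Qed.

Lemma lunitT_cc {A B : ActData M} (P : Prof A B) (HP : FL P) c e d (f : hom c d) (p : P d e) :
  lunitT P c e (cc (HomP A) P d f p) = pmap P f (cid e) p.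
Proof.
  destruct HP as [HP1 HP2].
  refine (lift (coend_rel (HomP A) P c e) (fun t => pmap P (fst (projT2 t)) (cid e) (snd (projT2 t))) _ (existT _ d (f, p))).
  intros a b []. simpl. rewrite HP2. rewrite !comp_id_l. try rewrite !comp_id_r. reflexivity.
Qed.

Lemma runitT_cc {A B : ActData M} (P : Prof A B) (HP : FL P) c e d (p : P c d) (g : hom d e) :
  runitT P c e (cc P (HomP B) d p g) = pmap P (cid c) g p.
Proof.
  destruct HP as [HP1 HP2].
  refine (lift (coend_rel P (HomP B) c e) (fun t => pmap P (cid c) (snd (projT2 t)) (fst (projT2 t))) _ (existT _ d (p, g))).
  intros a b []. simpl. rewrite HP2, !comp_id_l, comp_id_r. reflexivity.
Qed.

Definition Phi {A B D E : ActData M} (P : Prof A B) (Q : Prof B D) (S : Prof D E)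
  c f d (p : P c d) (w : (Q <o> S) d f) : ((P <o> Q) <o> S) c f :=
  let u := repr w in cc (P <o> Q) S (projT1 u) (cc P Q d p (fst (projT2 u))) (snd (projT2 u)).

Lemma Phi_cc {A B D E : ActData M} (P : Prof A B) (Q : Prof B D) (S : Prof D E)
  (HP : FL P) (HQ : FL Q) (HS : FL S) c f d (p : P c d) d' (q : Q d d') (s : S d' f) :
  Phi P Q S c f d p (cc Q S d' q s) = cc (P <o> Q) S d' (cc P Q d p q) s.
Proof.
  refine (lift _ (fun u => cc (P <o> Q) S (projT1 u) (cc P Q d p (fst (projT2 u))) (snd (projT2 u)))
             _ (existT _ d' (q, s))).
  intros a b []. simpl.
  rewrite <- cc_eq. f_equal.
  rewrite pmap_cc by assumption. destruct HP as [HP1 _]. rewrite HP1. reflexivity.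
Qed.

Lemma assocT_inv_cc {A B D E : ActData M} (P : Prof A B) (Q : Prof B D) (S : Prof D E)
  (HP : FL P) (HQ : FL Q) (HS : FL S) c f d (p : P c d) d' (q : Q d d') (s : S d' f) :
  assocT_inv P Q S c f (cc P (Q <o> S) d p (cc Q S d' q s)) = cc (P <o> Q) S d' (cc P Q d p q) s.
Proof.
  rewrite <- Phi_cc by assumption.
  refine (lift _ (fun t => Phi P Q S c f (projT1 t) (fst (projT2 t)) (snd (projT2 t)))
             _ (existT _ d (p, cc Q S d' q s))).
  intros a b []. cbn [projT1 projT2 fst snd]. revert q0. apply coend_ind. intros e q1 s1.
  rewrite pmap_cc by assumption. rewrite !Phi_cc by assumption.
  destruct HS as [HS1 _]. rewrite HS1. apply f_equal2; [|reflexivity].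
  apply cc_eq.
Qed.

Definition Psi {A B D E : ActData M} (P : Prof A B) (Q : Prof B D) (S : Prof D E)
  c f d' (w : (P <o> Q) c d') (s : S d' f) : (P <o> (Q <o> S)) c f :=
  let u := repr w in cc P (Q <o> S) (projT1 u) (fst (projT2 u)) (cc Q S d' (snd (projT2 u)) s).

Lemma Psi_cc {A B D E : ActData M} (P : Prof A B) (Q : Prof B D) (S : Prof D E)
  (HP : FL P) (HQ : FL Q) (HS : FL S) c f d (p : P c d) d' (q : Q d d') (s : S d' f) :
  Psi P Q S c f d' (cc P Q d p q) s = cc P (Q <o> S) d p (cc Q S d' q s).
Proof.
  refine (lift _ (fun u => cc P (Q <o> S) (projT1 u) (fst (projT2 u)) (cc Q S d' (snd (projT2 u)) s))
             _ (existT _ d (p, q))).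
  intros a b []. simpl.
  rewrite cc_eq. f_equal.
  rewrite pmap_cc by assumption. destruct HS as [HS1 _]. rewrite HS1. reflexivity.
Qed.

Lemma assocT_cc {A B D E : ActData M} (P : Prof A B) (Q : Prof B D) (S : Prof D E)
  (HP : FL P) (HQ : FL Q) (HS : FL S) c f d (p : P c d) d' (q : Q d d') (s : S d' f) :
  assocT P Q S c f (cc (P <o> Q) S d' (cc P Q d p q) s) = cc P (Q <o> S) d p (cc Q S d' q s).
Proof.
  rewrite <- Psi_cc by assumption.
  refine (lift _ (fun t => Psi P Q S c f (projT1 t) (fst (projT2 t)) (snd (projT2 t)))
             _ (existT _ d' (cc P Q d p q, s))).
  intros a b []. cbn [projT1 projT2 fst snd]. revert p0. apply coend_ind. intros e p1 q1.
  rewrite pmap_cc by assumption. rewrite !Psi_cc by assumption.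
  destruct HP as [HP1 _]. rewrite HP1. f_equal.
  apply cc_eq.
Qed.
End G.

Section Conc.
Context {M : MonCat} (C : ActData M) (HC : ActCoherent C).

Ltac cat := repeat (rewrite ?comp_id_l, ?comp_id_r, ?comp_assoc, ?act_id).

Lemma act_comp_l {A : ActData M} (m m' m'' : M) (x : A) (u : hom m m') (u' : hom m' m'') :
  act_hom (u ;; u') (cid x) = act_hom u (cid x) ;; act_hom u' (cid x).
Proof. rewrite <- act_comp, comp_id_l. reflexivity. Qed.

Lemma act_comp_r {A : ActData M} (m : M) (x x' x'' : A) (f : hom x x') (f' : hom x' x'') :
  act_hom (cid m) (f ;; f') = act_hom (cid m) f ;; act_hom (cid m) f'.
Proof. rewrite <- act_comp, comp_id_l. reflexivity. Qed.

Lemma act_swap {A : ActData M} (m m' : M) (x x' : A) (u : hom m m') (f : hom x x') :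
  act_hom u (cid x) ;; act_hom (cid m') f = act_hom (cid m) f ;; act_hom u (cid x').
Proof. rewrite <- !act_comp, !comp_id_l, !comp_id_r. reflexivity. Qed.

Lemma aassoc_inv_nat (m m' n n' : M) (x x' : C) (u : hom m m') (v : hom n n') (f : hom x x') :
  aassoc_inv m n x ;; act_hom (tens_hom u v) f
  = act_hom u (act_hom v f) ;; aassoc_inv m' n' x'.
Proof.
  rewrite <- (comp_id_r _ _ _ (aassoc_inv m n x ;; act_hom (tens_hom u v) f)).
  rewrite <- (aassoc_iso1 _ C m' n' x').
  rewrite comp_assoc, <- (comp_assoc _ _ _ _ _ (act_hom (tens_hom u v) f)), aassoc_nat.
  rewrite <- !comp_assoc, aassoc_iso2, comp_id_l. reflexivity.
Qed.

Lemma FL_Hom (A : ActData M) : FL (HomP A).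
Proof. split; intros; simpl; cat; reflexivity. Qed.

Lemma FL_R x : FL (Rx C x).
Proof. split; intros; simpl; [cat; reflexivity|]. rewrite act_comp_l. cat. reflexivity. Qed.

Lemma FL_L x : FL (Lx C x).
Proof. split; intros; simpl; [cat; reflexivity|]. rewrite act_comp_l. cat. reflexivity. Qed.

Lemma SN_R x : SN (Rx C x).
Proof.
  intros m c c' d d' f g h. simpl. rewrite !act_comp_r. cat.
  rewrite aassoc_inv_nat. reflexivity.
Qed.

Lemma SN_L x : SN (Lx C x).
Proof.
  intros m c c' d d' f g h. simpl. rewrite !act_comp_r.
  rewrite <- (comp_assoc _ _ _ _ _ (act_hom (tens_hom _ _) _)), aassoc_nat. cat. reflexivity.
Qed.

Definition epsT (x : C) (c c' : C) (z : (Rx C x <o> Lx C x) c c') : hom c c' :=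
  let t := repr z in (fst (projT2 t) : hom c (act (projT1 t) x)) ;; snd (projT2 t).

Definition etaT (x : C) (k k' : M) (h : HomP (selfAct M) k k') : (Lx C x <o> Rx C x) k k' :=
  cc (Lx C x) (Rx C x) (act k' x) (act_hom (h : hom k k') (cid x)) (cid (act k' x)).

Lemma eps_cc x c c' n (h : hom c (act n x)) (k : hom (act n x) c') :
  epsT x c c' (cc (Rx C x) (Lx C x) n h k) = h ;; k.
Proof.
  refine (lift (coend_rel (Rx C x) (Lx C x) c c')
            (fun t => (fst (projT2 t) : hom c (act (projT1 t) x)) ;; snd (projT2 t)) _
            (existT _ n (h, k))).
  intros a b []. simpl. cat. reflexivity.
Qed.

Lemma eps_nat x : IsTambMor (Rx C x <o> Lx C x) (HomP C) (epsT x).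
Proof.
  split.
  - intros c c' d d' f g z. revert z. apply coend_ind. intros n h k.
    rewrite pmap_cc by (apply FL_R || apply FL_L). rewrite !eps_cc.
    simpl. cat. reflexivity.
  - intros m c d z. revert z. apply coend_ind. intros n h k.
    rewrite pstr_cc; try (apply SN_R || apply SN_L || apply FL_R || apply FL_L).
    all: try (intros; simpl; cat; reflexivity).
    rewrite !eps_cc. simpl. rewrite act_comp_r. cat.
    rewrite <- (comp_assoc _ _ _ _ _ (aassoc_inv _ _ _)), aassoc_iso2. cat. reflexivity.
Qed.

Lemma eta_nat x : IsTambMor (HomP (selfAct M)) (Lx C x <o> Rx C x) (etaT x).
Proof.
  split.
  - intros k0 k1 k2 k3 f g h. unfold etaT.
    rewrite pmap_cc by (apply FL_R || apply FL_L).
    transitivity (cc (Lx C x) (Rx C x) (act k3 x)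
       (pmap (Lx C x) (cid k1) (act_hom g (cid x)) (act_hom (f ;; h) (cid x))) (cid (act k3 x))).
    + f_equal. simpl. rewrite !act_comp_l. cat. reflexivity.
    + rewrite cc_eq. f_equal; simpl; rewrite ?act_comp_l; cat; reflexivity.
  - intros m k k' h. unfold etaT.
    rewrite pstr_cc; try (apply SN_R || apply SN_L).
    all: try (intros; simpl; cat; reflexivity).
    transitivity (cc (Lx C x) (Rx C x) (act (tens m k') x)
       (pmap (Lx C x) (cid (tens m k)) (aassoc_inv m k' x)
          (aassoc m k x ;; act_hom (cid m) (act_hom h (cid x)))) (cid _)).
    + f_equal. simpl. cat. rewrite <- aassoc_inv_nat.
      rewrite <- comp_assoc, aassoc_iso1. cat. reflexivity.
    + refine (eq_trans (cc_eq (Lx C x) (Rx C x) (tens m k) (tens m k') _ _ (aassoc_inv m k' x) _ _) _). f_equal; simpl; cat; reflexivity.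
Qed.

Lemma Rf_nat {x y : C} (f : hom x y) (c c' : C) (d d' : selfAct M) (g1 : hom c' c) (g2 : hom d d')
  (h : Rx C x c d) : Rf C f c' d' (pmap (Rx C x) g1 g2 h) = pmap (Rx C y) g1 g2 (Rf C f c d h).
Proof. unfold Rf. simpl. cat. rewrite act_swap. reflexivity. Qed.

Lemma Lf_nat {x y : C} (f : hom x y) (c c' : selfAct M) (d d' : C) (g1 : hom c' c) (g2 : hom d d')
  (h : Lx C y c d) : Lf C f c' d' (pmap (Lx C y) g1 g2 h) = pmap (Lx C x) g1 g2 (Lf C f c d h).
Proof. unfold Lf. simpl. cat. rewrite <- !comp_assoc, act_swap. reflexivity. Qed.
End Conc.

Theorem mainTheorem2 (M : MonCat) (C : ActData M) (HC : ActCoherent C) :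
  exists (eps : forall (x : C) (c c' : C), (Rx C x <o> Lx C x) c c' -> HomP C c c')
         (eta : forall (x : C) (k k' : M), HomP (selfAct M) k k' -> (Lx C x <o> Rx C x) k k'),
    (forall (x c c' : C) (n : M) (h : hom c (act n x)) (k : hom (act n x) c'),
        eps x c c' (cc (Rx C x) (Lx C x) n h k) = h ;; k) /\
    (forall (x : C) (k k' : M) (h : hom k k'),
        eta x k k' h
        = cc (Lx C x) (Rx C x) (act k' x) (act_hom h (cid x)) (cid (act k' x))) /\
    (forall x : C, IsTambMor (Rx C x <o> Lx C x) (HomP C) (eps x)) /\
    (forall x : C, IsTambMor (HomP (selfAct M)) (Lx C x <o> Rx C x) (eta x)) /\
    (forall (x c : C) (n : M) (h : Rx C x c n),
        lunitT (Rx C x) c n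
          (whiskR (eps x) (Rx C x) c n
            (assocT_inv (Rx C x) (Lx C x) (Rx C x) c n
              (whiskL (Rx C x) (Q := HomP (selfAct M)) (Q' := Lx C x <o> Rx C x) (eta x) c n
                (runitT_inv (Rx C x) c n h)))) = h) /\
    (forall (x : C) (n : M) (c : C) (h : Lx C x n c),
        runitT (Lx C x) n c
          (whiskL (Lx C x) (eps x) n c
            (assocT (Lx C x) (Rx C x) (Lx C x) n c
              (whiskR (P := HomP (selfAct M)) (P' := Lx C x <o> Rx C x) (eta x) (Lx C x) n c
                (lunitT_inv (Lx C x) n c h)))) = h) /\
    (forall (x y : C) (f : hom x y) (c c' : C) (z : (Rx C x <o> Lx C y) c c'),
        eps y c c' (whiskR (Rf C f) (Lx C y) c c' z)
        = eps x c c' (whiskL (Rx C x) (Lf C f) c c' z)) /\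
    (forall (x y : C) (f : hom x y) (k k' : M) (h : hom k k'),
        whiskL (Lx C x) (Rf C f) k k' (eta x k k' h)
        = whiskR (Lf C f) (Rx C y) k k' (eta y k k' h)).
Proof.
  Ltac cat := repeat (rewrite ?comp_id_l, ?comp_id_r, ?comp_assoc, ?act_id).
  exists (epsT C), (etaT C).
  split; [exact (eps_cc C)|].
  split; [reflexivity|].
  split; [exact (eps_nat C)|].
  split; [exact (eta_nat C)|].
  split.
  { intros x c n h. unfold runitT_inv.
    rewrite whiskL_cc by apply (proj1 (eta_nat C x)). unfold etaT.
    rewrite assocT_inv_cc by (apply FL_R || apply FL_L).
    rewrite whiskR_cc by apply (proj1 (eps_nat C x)).
    rewrite eps_cc, lunitT_cc by apply FL_R.
    simpl. cat. reflexivity. }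
  split.
  { intros x n c h. unfold lunitT_inv.
    rewrite whiskR_cc by apply (proj1 (eta_nat C x)). unfold etaT.
    rewrite assocT_cc by (apply FL_R || apply FL_L).
    rewrite whiskL_cc by apply (proj1 (eps_nat C x)).
    rewrite eps_cc, runitT_cc by apply FL_L.
    simpl. cat. reflexivity. }
  split.
  { intros x y f c c' z. revert z. apply coend_ind. intros n h k.
    rewrite whiskR_cc by apply Rf_nat. rewrite whiskL_cc by apply Lf_nat.
    rewrite !eps_cc. unfold Rf, Lf. cat. reflexivity. }
  { intros x y f k k' h. unfold etaT.
    rewrite whiskL_cc by apply Rf_nat. rewrite whiskR_cc by apply Lf_nat.
    transitivity (cc (Lx C x) (Rx C y) (act k' x) (act_hom h (cid x))
                   (pmap (Rx C y) (act_hom (cid k') f) (cid k') (cid (act k' y)))).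
    - f_equal. unfold Rf. simpl. cat. reflexivity.
    - refine (eq_trans (eq_sym (cc_eq (Lx C x) (Rx C y) k k' _ _ (act_hom (cid k') f) _ _)) _). f_equal. unfold Lf. simpl. cat. apply act_swap. }
Qed.
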